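(* Let $\sigma$ be an ergodic measure-preserving transformation of $(\Omega,\mathbb P)$ and $A\colon\Omega\to M_{d\times d}(\mathbb R)$ measurable with $\log^+\|A(\omega)\|$ integrable. There exists $C>0$ such that for all $\eta_0>0$ there exists $\epsilon_0>0$ such that for all $0<\epsilon<\epsilon_0$ there is a measurable $G\subseteq\Omega$ with $\mathbb P(G)\ge1-\eta_0$ such that for all $\omega\in G$ and all sequences $(\Delta_n)\in U^{\mathbb Z}$, $$\big\|(A(\sigma^{N-1}\omega)+\epsilon\Delta_{N-1})\cdots(A(\omega)+\epsilon\Delta_0)-A(\sigma^{N-1}\omega)\cdots A(\omega)\big\|\le1,$$ where $N=\lfloor C|\log\epsilon|\rfloor$.
   Context: Norms are operator norms; $U=\{M\in M_{d\times d}(\mathbb R):\|M\|\le1\}$. *)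

(* Defs.v *)
From HB Require Import structures.
From mathcomp Require Import all_boot all_order all_algebra.
From mathcomp Require Import all_classical all_reals all_analysis.
Set Implicit Arguments. Unset Strict Implicit. Unset Printing Implicit Defensive.
Import Order.TTheory GRing.Theory Num.Theory.
Local Open Scope classical_set_scope.
Local Open Scope ring_scope.

Definition vnorm (R : realType) (d : nat) (v : 'cV[R]_d) : R :=
  Num.sqrt (\sum_(i < d) v i 0 ^+ 2).

Definition opnorm (R : realType) (d : nat) (M : 'M[R]_d) : R :=
  sup [set vnorm (M *m v) | v in [set v : 'cV[R]_d | vnorm v <= 1]].

Definition logplus (R : realType) (x : R) : R := Num.max 0 (ln x).

Fixpoint lprod (R : realType) (d : nat) (B : nat -> 'M[R]_d) (n : nat) : 'M[R]_d :=
  match n with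
  | 0 => 1%:M
  | n'.+1 => B n' *m lprod B n'
  end.

Definition measure_preserving (R : realType) (dsp : measure_display)
  (T : measurableType dsp) (P : probability T R) (sigma : T -> T) : Prop :=
  measurable_fun setT sigma /\
  forall B : set T, measurable B -> P (sigma @^-1` B) = P B.

Definition ergodic (R : realType) (dsp : measure_display)
  (T : measurableType dsp) (P : probability T R) (sigma : T -> T) : Prop :=
  forall B : set T, measurable B -> sigma @^-1` B = B ->
    P B = 0%E \/ P B = 1%E.

(* Main.v *)
Require Import Defs.
From HB Require Import structures.
From mathcomp Require Import all_boot all_order all_algebra.
From mathcomp Require Import all_classical all_reals all_analysis.
From mathcomp Require Import ring lra zify measurable_realfun.
Import Order.TTheory GRing.Theory Num.Theory.
Local Open Scope classical_set_scope.
Local Open Scope ring_scope.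

Lemma cauchy_schwarz (R : realType) (n : nat) (a b : 'I_n -> R) :
  (\sum_i a i * b i) ^+ 2 <= (\sum_i a i ^+ 2) * (\sum_i b i ^+ 2).
Proof.
have E1 : (\sum_i a i ^+ 2) * (\sum_i b i ^+ 2) =
   \sum_i \sum_j (a i ^+ 2 * b j ^+ 2).
  by rewrite mulr_suml; apply: eq_bigr => i _; rewrite mulr_sumr.
have E2 : (\sum_i a i * b i) ^+ 2 = \sum_i \sum_j (a i * b i * (a j * b j)).
  by rewrite expr2 mulr_suml; apply: eq_bigr => i _; rewrite mulr_sumr.
have E3 : \sum_i \sum_j (a i * b j - a j * b i) ^+ 2 =
  \sum_i \sum_j (a i ^+ 2 * b j ^+ 2) - 2 * \sum_i \sum_j (a i * b i * (a j * b j))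
  + \sum_i \sum_j (a j ^+ 2 * b i ^+ 2).
  rewrite mulr_sumr -sumrN -!big_split /=; apply: eq_bigr => i _.
  rewrite mulr_sumr -sumrN -!big_split /=; apply: eq_bigr => j _.
  ring.
have E4 : \sum_i \sum_j (a j ^+ 2 * b i ^+ 2) = \sum_i \sum_j (a i ^+ 2 * b j ^+ 2).
  by rewrite exchange_big.
have H0 : 0 <= \sum_i \sum_j (a i * b j - a j * b i) ^+ 2.
  by apply: sumr_ge0 => i _; apply: sumr_ge0 => j _; exact: sqr_ge0.
rewrite E1 E2; move: H0; rewrite E3 E4; lra.
Qed.
Section M.
Variables (R : realType) (d : nat).
Implicit Types (v w : 'cV[R]_d) (M : 'M[R]_d).

Lemma vnorm_ge0 v : 0 <= vnorm v.
Proof. exact: sqrtr_ge0. Qed.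

Lemma sumsq_ge0 v : 0 <= \sum_(i < d) v i 0 ^+ 2.
Proof. by apply: sumr_ge0 => i _; exact: sqr_ge0. Qed.

Lemma vnorm_sq v : vnorm v ^+ 2 = \sum_(i < d) v i 0 ^+ 2.
Proof. by rewrite /vnorm sqr_sqrtr // sumsq_ge0. Qed.

Lemma coord_le v i : `|v i 0| <= vnorm v.
Proof.
rewrite -(ger0_norm (vnorm_ge0 v)) -ler_sqr ?normr_ge0 // !real_normK ?num_real //.
rewrite vnorm_sq (bigD1 i) //= lerDl; apply: sumr_ge0 => j _; exact: sqr_ge0.
Qed.

Lemma vnormD v w : vnorm (v + w) <= vnorm v + vnorm w.
Proof.
have hs : \sum_(i < d) (v + w) i 0 ^+ 2 = \sum_(i < d) v i 0 ^+ 2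
   + 2 * \sum_(i < d) (v i 0 * w i 0) + \sum_(i < d) w i 0 ^+ 2.
  rewrite mulr_sumr -!big_split /=; apply: eq_bigr => i _; rewrite !mxE; ring.
have cs : \sum_(i < d) (v i 0 * w i 0) <= vnorm v * vnorm w.
  apply: (le_trans (ler_norm _)).
  rewrite -sqrtr_sqr /vnorm -sqrtrM ?sumsq_ge0 //.
  by apply: ler_wsqrtr; exact: (@cauchy_schwarz R d (fun i => v i 0) (fun i => w i 0)).
rewrite -(ger0_norm (vnorm_ge0 (v + w))) -(ger0_norm (addr_ge0 (vnorm_ge0 v) (vnorm_ge0 w))).
rewrite -ler_sqr ?normr_ge0 // !real_normK ?num_real // vnorm_sq hs sqrrD -!vnorm_sq.
lra.
Qed.

Lemma vnormZ (c : R) v : vnorm (c *: v) = `|c| * vnorm v.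
Proof.
rewrite /vnorm -sqrtr_sqr -sqrtrM ?sqr_ge0 //; congr Num.sqrt.
rewrite mulr_sumr; apply: eq_bigr => i _; rewrite !mxE; ring.
Qed.

Lemma vnormN v : vnorm (- v) = vnorm v.
Proof. by rewrite -scaleN1r vnormZ normrN normr1 mul1r. Qed.

Lemma vnormB v w : vnorm (v - w) <= vnorm v + vnorm w.
Proof. by rewrite -(vnormN w); exact: vnormD. Qed.

Lemma vnorm_eq0 v : vnorm v = 0 -> v = 0.
Proof.
move=> h; apply/matrixP => i j; rewrite (ord1 j) mxE; apply/normr0_eq0.
by apply/le_anti; rewrite normr_ge0 andbT -h coord_le.
Qed.

Lemma vnorm_le_l1 v : vnorm v <= \sum_(i < d) `|v i 0|.
Proof.
have h0 : 0 <= \sum_(i < d) `|v i 0| by apply: sumr_ge0 => i _.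
rewrite -(ger0_norm (vnorm_ge0 v)) -(ger0_norm h0) -ler_sqr ?normr_ge0 //.
rewrite !real_normK ?num_real // vnorm_sq expr2 mulr_suml.
apply: ler_sum => i _; rewrite mulr_sumr (bigD1 i) //=.
rewrite -[v i 0 ^+ 2]real_normK ?num_real // expr2.
rewrite lerDl; apply: sumr_ge0 => j _; exact: mulr_ge0.
Qed.

Definition opset M := [set vnorm (M *m v) | v in [set v : 'cV[R]_d | vnorm v <= 1]].

Lemma opset_n0 M : opset M !=set0.
Proof. exists (vnorm (M *m 0)); exists 0 => //=; rewrite /vnorm big1 ?sqrtr0 // => i _; by rewrite mxE expr2 mulr0. Qed.

Lemma opset_ub M : has_ubound (opset M).
Proof.
exists (\sum_(i < d) \sum_(j < d) `|M i j|) => _ [v /= hv <-].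
apply: (le_trans (vnorm_le_l1 _)); apply: ler_sum => i _; rewrite mxE.
apply: (le_trans (ler_norm_sum _ _ _)); apply: ler_sum => j _.
rewrite normrM -[X in _ <= X]mulr1; apply: ler_wpM2l => //.
exact: le_trans (coord_le _ _) hv.
Qed.

Lemma opnorm_ub M v : vnorm v <= 1 -> vnorm (M *m v) <= opnorm M.
Proof. by move=> hv; apply: (ub_le_sup (opset_ub M)); exists v. Qed.

Lemma vnorm0 : vnorm (0 : 'cV[R]_d) = 0.
Proof. by rewrite /vnorm big1 ?sqrtr0 // => i _; rewrite mxE expr2 mulr0. Qed.

Lemma opnorm_ge0 M : 0 <= opnorm M.
Proof. by rewrite -vnorm0 -(mulmx0 _ M); apply: opnorm_ub; rewrite vnorm0. Qed.

Lemma opnorm_le M c : (forall v, vnorm v <= 1 -> vnorm (M *m v) <= c) -> opnorm M <= c.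
Proof. by move=> h; apply: ge_sup; [exact: opset_n0 | move=> _ [v hv <-]; exact: h]. Qed.

Lemma opnorm_vec M v : vnorm (M *m v) <= opnorm M * vnorm v.
Proof.
have [h0|hn] := eqVneq (vnorm v) 0.
  by rewrite (@vnorm_eq0 v h0) mulmx0 vnorm0 mulr0.
have hp : 0 < vnorm v by rewrite lt_neqAle eq_sym hn vnorm_ge0.
have hv : v = vnorm v *: ((vnorm v)^-1 *: v) by rewrite scalerA divff // scale1r.
rewrite [in X in X <= _]hv -scalemxAr vnormZ ger0_norm ?vnorm_ge0 // mulrC.
apply: ler_wpM2r; first exact: vnorm_ge0.
apply: opnorm_ub; rewrite vnormZ ger0_norm ?invr_ge0 ?vnorm_ge0 // mulVf //.
Qed.

Lemma opnorm_vecD M1 M2 v : vnorm ((M1 + M2) *m v) <= (opnorm M1 + opnorm M2) * vnorm v.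
Proof.
rewrite mulmxDl mulrDl; apply: (le_trans (vnormD _ _)).
by apply: lerD; exact: opnorm_vec.
Qed.

Lemma perturb (B Dl : nat -> 'M[R]_d) (eps : R) :
  0 <= eps <= 1 -> (forall k, opnorm (Dl k) <= 1) ->
  forall n v,
  vnorm (lprod B n *m v) <= (\prod_(k < n) (opnorm (B k) + 1)) * vnorm v /\
  vnorm ((lprod (fun k => B k + eps *: Dl k) n - lprod B n) *m v)
    <= n%:R * eps * (\prod_(k < n) (opnorm (B k) + 1)) * vnorm v.
Proof.
move=> /andP[e0 e1] hD; elim=> [|n IH] v.
  rewrite /= big_ord0 subrr mul0mx mul1mx vnorm0 mul1r !mul0r; split => //.
have [IH1 IH2] := IH v.
set Q := \prod_(k < n) (opnorm (B k) + 1).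
have Q0 : 0 <= Q by apply: prodr_ge0 => k _; apply: addr_ge0 => //; exact: opnorm_ge0.
have a0 := opnorm_ge0 (B n).
have v0 := vnorm_ge0 v.
rewrite big_ord_recr /= -/Q; split.
  rewrite -mulmxA; apply: (le_trans (opnorm_vec _ _)).
  apply: le_trans (ler_wpM2l a0 IH1) _.
  rewrite mulrA ler_wpM2r // mulrC ler_wpM2l //; lra.
set P' := lprod (fun k => B k + eps *: Dl k) n.
set P := lprod B n.
have -> : ((B n + eps *: Dl n) *m P' - B n *m P) *m v =
   (B n + eps *: Dl n) *m ((P' - P) *m v) + eps *: (Dl n *m (P *m v)).
  rewrite !mulmxBl !mulmxA mulmxBr !mulmxDl -!scalemxAl !mulmxA.
  by rewrite opprD addrA subrK.
apply: (le_trans (vnormD _ _)); rewrite vnormZ ger0_norm //.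
have h1 : vnorm ((B n + eps *: Dl n) *m ((P' - P) *m v)) <=
    (opnorm (B n) + opnorm (eps *: Dl n)) * (n%:R * eps * Q * vnorm v).
  apply: le_trans (opnorm_vecD _ _ _) _; apply: ler_wpM2l => //.
  by apply: addr_ge0 => //; exact: opnorm_ge0.
have h2 : opnorm (eps *: Dl n) <= eps.
  apply: opnorm_le => w hw; rewrite -scalemxAl vnormZ ger0_norm //.
  rewrite -[X in _ <= X]mulr1; apply: ler_wpM2l => //.
  apply: le_trans (opnorm_vec _ _) _; rewrite -[1]mulr1; by apply: ler_pM => //; try exact: opnorm_ge0; try exact: vnorm_ge0; exact: hD.
have h3 : vnorm (Dl n *m (P *m v)) <= Q * vnorm v.
  apply: le_trans (opnorm_vec _ _) _; rewrite -[X in _ <= X]mul1r.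
  by apply: ler_pM => //; try exact: opnorm_ge0; try exact: vnorm_ge0; exact: hD.
have n0 : (0 : R) <= n%:R by [].
have hx0 := vnorm_ge0 ((P' - P) *m v).
have hD0 := opnorm_ge0 (eps *: Dl n).
set X := vnorm ((P' - P) *m v) in h1 hx0 *.
set Y := vnorm (Dl n *m (P *m v)) in h3 *.
set a := opnorm (B n) in a0 h1 *.
set b := opnorm (eps *: Dl n) in h1 h2 hD0.
set V := vnorm v in v0 IH1 IH2 h1 h3 *.
rewrite -natr1.
have hQV : 0 <= Q * V by exact: mulr_ge0.
have h4 : (a + b) * (n%:R * eps * Q * V) <= (a + 1) * (n%:R * eps * Q * V).
  apply: ler_wpM2r; first by rewrite !mulr_ge0.
  lra.
have h5 : eps * Y <= eps * (Q * V) by exact: ler_wpM2l.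
have h6 : eps * (Q * V) <= eps * (Q * V) * (a + 1).
  rewrite -[X in X <= _]mulr1; apply: ler_wpM2l; [exact: mulr_ge0 | lra].
have -> : (n%:R + 1) * eps * (Q * (a + 1)) * V =
   (a + 1) * (n%:R * eps * Q * V) + eps * (Q * V) * (a + 1) by ring.
lra.
Qed.
End M.

Lemma one_add_le_exp (R : realType) (a : R) : 0 <= a -> 1 + a <= expR (logplus a + 1).
Proof.
move=> a0; rewrite /logplus.
have e1 : 2 <= expR (1 : R) by have := expR_ge1Dx (1 : R); rewrite (_ : 1 + 1 = 2 :> R) //.
have [a1|a1] := leP a 1.
  apply: (@le_trans _ _ (expR 1)); first lra.
  by rewrite ler_expR lerDr le_max lexx.
have lnp : 0 <= ln a by apply: ln_ge0; lra.
rewrite max_r // expRD lnK ?posrE; last lra.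
have : a * 2 <= a * expR 1 by apply: ler_wpM2l => //; lra.
lra.
Qed.

Lemma final_bound (R : realType) (eps C L' : R) (N : nat) (a : nat -> R) :
  0 < eps < 1 -> 0 <= C -> C <= 1/2 -> C * L' <= 1/2 -> 0 <= L' ->
  (forall k, 0 <= a k) -> N%:R <= C * (- ln eps) ->
  \sum_(k < N) (logplus (a k) + 1) <= L' * N%:R ->
  N%:R * eps * \prod_(k < N) (a k + 1) <= 1.
Proof.
move=> /andP[e0 e1] C0 C1 CL L0 a0 hN hS.
set x := Num.sqrt eps.
have x0 : 0 < x by rewrite sqrtr_gt0.
have x1 : x < 1 by rewrite -sqrtr1 ltr_sqrt.
have ex : eps = x * x by rewrite -expr2 sqr_sqrtr // ltW.
have lex : ln eps = ln x + ln x by rewrite ex lnM ?posrE.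
have lnx : ln x < 0 by apply: ln_lt0; rewrite x0 x1.
have hprod : \prod_(k < N) (a k + 1) <= expR (\sum_(k < N) (logplus (a k) + 1)).
  rewrite expR_sum; apply: ler_prod => k _; rewrite addr_ge0 //= addrC.
  exact: one_add_le_exp.
have hS2 : \sum_(k < N) (logplus (a k) + 1) <= - ln x.
  apply: (le_trans hS); apply: (@le_trans _ _ (L' * (C * (- ln eps)))).
    exact: ler_wpM2l.
  rewrite mulrA (mulrC L') lex.
  have : C * L' * (- (ln x + ln x)) <= 1/2 * (- (ln x + ln x)).
    apply: ler_wpM2r => //; lra.
  lra.
have hq : \prod_(k < N) (a k + 1) <= x^-1.
  apply: (le_trans hprod); apply: (@le_trans _ _ (expR (- ln x))).
    by rewrite ler_expR.
  by rewrite -lnV ?posrE // lnK ?posrE ?invr_gt0.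
have q0 : 0 <= \prod_(k < N) (a k + 1).
  by apply: prodr_ge0 => k _; apply: addr_ge0.
have n0 : (0 : R) <= N%:R by [].
have h1 : N%:R * eps * \prod_(k < N) (a k + 1) <= N%:R * eps * x^-1.
  by apply: ler_wpM2l => //; apply: mulr_ge0 => //; lra.
have h2 : N%:R * eps * x^-1 = N%:R * x by rewrite ex mulrA mulfK // gt_eqF.
have hsub : - ln x < x^-1.
  by rewrite -lnV ?posrE //; apply: ln_sublinear; rewrite invr_gt0.
have h3 : N%:R * x <= C * (- ln eps) * x by apply: ler_wpM2r => //; lra.
have h4 : C * (- ln eps) * x <= - ln x * x.
  rewrite lex; apply: ler_wpM2r; [lra|].
  have : C * (- (ln x + ln x)) <= 1/2 * (- (ln x + ln x)) by apply: ler_wpM2r => //; lra.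
  lra.
have h5 : - ln x * x <= x^-1 * x by apply: ler_wpM2r; [lra | exact: ltW].
rewrite mulVf ?gt_eqF // in h5.
lra.
Qed.

Lemma sum_split (R : realType) (x : nat -> R) (p m : nat) :
  \sum_(j < p + m) x j = \sum_(j < p) x j + \sum_(i < m) x (p + i)%N.
Proof. by rewrite big_split_ord. Qed.

Lemma sum_mono (R : realType) (g : nat -> R) (p q : nat) :
  (forall j, 0 <= g j) -> (p <= q)%N -> \sum_(j < p) g j <= \sum_(j < q) g j.
Proof.
move=> g0 hpq; rewrite -(subnKC hpq) sum_split lerDl.
by apply: sumr_ge0 => i _.
Qed.

Lemma chain (R : realType) (x g : nat -> R) (L : R) (K : nat) :
  0 <= L -> (forall j, 0 <= x j) -> (forall j, 0 <= g j) ->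
  (forall p, g p = x p \/ exists2 t, (t < K)%N & \sum_(i < t.+1) x (p + i)%N < L * t.+1%:R) ->
  forall N, \sum_(j < N) x j <= L * (N + K)%:R + \sum_(j < N + K) g j.
Proof.
move=> L0 x0 g0 H.
have claim : forall n, exists p, [/\ (n <= p)%N, (p <= n + K)%N &
    \sum_(j < p) x j <= L * p%:R + \sum_(j < p) g j].
  elim=> [|n [p [h1 h2 h3]]].
    by exists 0%N; split => //; rewrite !big_ord0 mulr0 addr0.
  have [hlt|heq] := ltnP n p.
    by exists p; split => //; lia.
  have pn : p = n by lia.
  case: (H p) => [hg|[t ht hs]].
    exists p.+1; split; [lia|lia|].
    rewrite !big_ord_recr /= -hg -natr1 mulrDr mulr1.
    have := h3; lra.
  exists (p + t.+1)%N; split; [lia|lia|].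
  rewrite !sum_split natrD mulrDr.
  have : 0 <= \sum_(i < t.+1) g (p + i)%N by apply: sumr_ge0.
  have := h3; lra.
move=> N; have [p [h1 h2 h3]] := claim N.
apply: le_trans (@sum_mono _ x N p x0 h1) _.
apply: le_trans h3 _; apply: lerD.
  by apply: ler_wpM2l => //; rewrite ler_nat.
exact: sum_mono g0 h2.
Qed.

Section Prob.
Context (dsp : measure_display) (T : measurableType dsp) (R : realType)
  (P : probability T R) (s : T -> T).
Hypothesis mp : measure_preserving P s.

Lemma iter_meas j : measurable_fun setT (iter j s).
Proof.
elim: j => [|j IH] /=; first exact: measurable_id.
exact: measurableT_comp (proj1 mp) IH.
Qed.

Lemma iter_pres j B : measurable B -> P (iter j s @^-1` B) = P B.
Proof.
elim: j B => [|j IH] B mB //=.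
have -> : (fun x => s (iter j s x)) @^-1` B = iter j s @^-1` (s @^-1` B) by [].
rewrite IH ?(proj2 mp) //.
by rewrite -(setTI (s @^-1` B)); apply: (proj1 mp).
Qed.

Local Open Scope ereal_scope.
Lemma integral_iter (j : nat) (g : T -> \bar R) : measurable_fun setT g -> (forall x, 0 <= g x) ->
  \int[P]_x g (iter j s x) = \int[P]_x g x.
Proof.
move=> mg g0.
have := ge0_integral_pushforward (iter_meas j) P measurableT mg (fun y _ => g0 y).
rewrite preimage_setT => <-.
apply: (eq_measure_integral P); first exact: iter_meas.
by move=> ? A mA _ /=; rewrite /pushforward iter_pres.
Qed.
Local Close Scope ereal_scope.

Definition Ssum (h : T -> R) (n : nat) (x : T) : R := \sum_(j < n) h (iter j s x).

Lemma Ssum_meas (h : T -> R) (n : nat) : measurable_fun setT h -> measurable_fun setT (Ssum h n).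
Proof.
move=> mh; elim: n => [|n IH].
  by rewrite /Ssum; under eq_fun do rewrite big_ord0; exact: measurable_cst.
rewrite /Ssum; under eq_fun do rewrite big_ord_recr /=.
apply: measurable_funD => //; exact: measurableT_comp mh (iter_meas n).
Qed.

Lemma Ssum_ge0 (h : T -> R) (n : nat) (x : T) : (forall y, 0 <= h y) -> 0 <= Ssum h n x.
Proof. by move=> h0; apply: sumr_ge0. Qed.

Lemma integral_Ssum (h : T -> R) (n : nat) (c : R) : measurable_fun setT h -> (forall y, 0 <= h y) ->
  (\int[P]_x (h x)%:E = c%:E)%E -> (\int[P]_x (Ssum h n x)%:E = (n%:R * c)%:E)%E.
Proof.
move=> mh h0 hc.
have mE : measurable_fun setT (EFin \o h) by apply/measurable_EFinP.
under eq_integral do rewrite /Ssum -sumEFin.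
rewrite ge0_integral_sum //; last first.
  - by move=> j x _; rewrite lee_fin.
  - move=> j; apply/measurable_EFinP; exact: measurableT_comp mh (iter_meas j).
under eq_bigr => j _ do rewrite (@integral_iter j (EFin \o h) mE (fun y => (introT idP (h0 y) : (0 <= (h y)%:E)%E))).
have hc' : (\int[P]_x (EFin \o h) x = c%:E)%E by [].
under eq_bigr do rewrite hc'.
by rewrite sumEFin sumr_const card_ord mulr_natl.
Qed.

Lemma markov_nn (h : T -> R) (c : R) : 0 < c -> measurable_fun setT h -> (forall x, 0 <= h x) ->
  (c%:E * P [set x | (c <= h x)%R] <= \int[P]_x (h x)%:E)%E.
Proof.
move=> c0 mh h0.
have := @le_integral_comp_abse _ T R P setT measurableT (EFin \o h) c id (@measurable_id _ _ setT).
move=> /(_ (fun r h => h) (fun x y _ _ h => h)) /(_ ltac:(exact/measurable_EFinP) c0).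
rewrite setTI /=.
have E : [set x | (c%:E <= `|(h x)%:E|)%E] = [set x | (c <= h x)%R].
  by apply/seteqP; split => x /=; rewrite ger0_norm // lee_fin.
rewrite E; under eq_integral do rewrite ger0_norm //.
by [].
Qed.

Lemma meas_lt (h : T -> R) (c : R) : measurable_fun setT h -> measurable [set x | h x < c].
Proof.
move=> mh; have := mh measurableT _ (measurable_itv `]-oo, c[); rewrite setTI.
by congr measurable; apply/seteqP; split => x /=; rewrite in_itv.
Qed.

Lemma meas_ge (h : T -> R) (c : R) : measurable_fun setT h -> measurable [set x | c <= h x].
Proof.
move=> mh; have := mh measurableT _ (measurable_itv `[c, +oo[); rewrite setTI.
by congr measurable; apply/seteqP; split => x /=; rewrite in_itv /= andbT.
Qed.

Lemma io_transfer (x y : nat -> R) (t : nat -> nat) (c q q' : R) :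
  0 <= q' -> q < q' -> (forall n, (n <= (t n).+1)%N) ->
  (forall n, y (t n) <= x n + c) ->
  (forall m, exists2 n, (m <= n)%N & x n < q * n%:R) ->
  forall m, exists2 n, (m <= n)%N & y n < q' * n%:R.
Proof.
move=> q'0 qq' ht hyx H m.
set K := Num.truncn ((c + q') / (q' - q)).
have [n hn hx] := H (m + K).+1.
exists (t n); first by have := ht n; lia.
have hK := truncnS_gt ((c + q') / (q' - q)); rewrite -/K in hK.
have hnK : (K.+1%:R : R) <= n%:R by rewrite ler_nat; lia.
have hqq : 0 < q' - q by rewrite subr_gt0.
have h1 : c + q' < (q' - q) * n%:R.
  by rewrite mulrC -ltr_pdivrMr //; apply: (lt_le_trans hK).
have htn : (n%:R : R) <= (t n)%:R + 1 by rewrite natr1 ler_nat; exact: ht.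
have h2 : q' * (n%:R - 1) <= q' * (t n)%:R by apply: ler_wpM2l => //; lra.
have := hyx n.
nra.
Qed.

Section Erg.
Hypothesis erg : ergodic P s.
Variable f : T -> R.
Hypothesis f0 : forall x, 0 <= f x.
Hypothesis mf : measurable_fun setT f.
Variable I : R.
Hypothesis hI : (\int[P]_x (f x)%:E)%E = I%:E.

Let S := Ssum f.
Definition Lc := I + 1.
Definition qk (k : nat) := Lc - (k.+1%:R)^-1.
Definition Dk (k : nat) := [set x | forall m, exists2 n, (m <= n)%N & S n x < qk k * n%:R].
Definition Dset := [set x | exists k, Dk k x].

Lemma I_ge0 : 0 <= I.
Proof. by rewrite -lee_fin -hI; apply: integral_ge0 => x _; rewrite lee_fin. Qed.

Lemma S_shift n x : S n.+1 x = f x + S n (s x).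
Proof. rewrite /S /Ssum big_ord_recl /=; congr (_ + _); by apply: eq_bigr => i _; rewrite add0n -iterS iterSr. Qed.

Lemma S0 x : S 0 x = 0.
Proof. by rewrite /S /Ssum big_ord0. Qed.

Lemma qk_lt k : qk k < qk (k.*2.+1).
Proof.
rewrite /qk ltrD2l ltrN2 ltf_pV2 ?posrE ?ltr0n // ltr_nat -addnn; lia.
Qed.

Lemma qk_ge0 k : 0 <= qk k.
Proof.
rewrite /qk /Lc; have := I_ge0; have : (k.+1%:R : R)^-1 <= 1.
  by rewrite invf_le1 ?ltr0n // ler1n.
set z := (k.+1%:R : R)^-1.
lra.
Qed.

Lemma Dset_inv : s @^-1` Dset = Dset.
Proof.
apply/seteqP; split => x /= [k hk]; exists k.*2.+1.
- apply: (@io_transfer (fun n => S n (s x)) (fun n => S n x) (fun n => n.+1) (f x) (qk k)) => //.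
  + exact: qk_ge0.
  + exact: qk_lt.
  + by move=> n; lia.
  + by move=> n; rewrite S_shift addrC.
- apply: (@io_transfer (fun n => S n x) (fun n => S n (s x)) (fun n => n.-1) 0 (qk k)) => //.
  + exact: qk_ge0.
  + exact: qk_lt.
  + by move=> n; lia.
  + case=> [|n] /=; first by rewrite !S0 addr0.
    by rewrite S_shift addr0 lerDr.
Qed.

Lemma Dk_meas k : measurable (Dk k).
Proof.
have -> : Dk k = \bigcap_m \bigcup_(n in [set n | (m <= n)%N]) [set x | S n x < qk k * n%:R].
  apply/seteqP; split => x /=.
    by move=> h m _; have [n hn hs] := h m; exists n.
  by move=> h m; have [n hn hs] := h m Logic.I; exists n.
apply: bigcapT_measurable => m; apply: bigcup_measurable => n _.
exact/meas_lt/Ssum_meas.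
Qed.

Lemma Dset_meas : measurable Dset.
Proof.
have -> : Dset = \bigcup_k Dk k.
  by apply/seteqP; split => x /= [k]; [exists k | move=> _ h; exists k].
exact: bigcupT_measurable Dk_meas.
Qed.

Lemma P_fin {A : set T} : measurable A -> P A = (fine (P A))%:E.
Proof.
move=> mA; rewrite fineK //; apply/fin_numPlt; apply/andP; split.
  by apply: (lt_le_trans _ (measure_ge0 P A)); rewrite ltNye.
by apply: (le_lt_trans (probability_le1 P mA)); rewrite ltey.
Qed.

Lemma PD1 : P Dset = 1%E.
Proof.
case: (erg _ Dset_meas Dset_inv) => // hD0; exfalso.
set q1 := qk 1.
have q1E : q1 = I + 2^-1 by rewrite /q1 /qk /Lc; field.
have I0 := I_ge0.
have q1p : 0 < q1 by rewrite q1E; have : (0 : R) < 2^-1 by []; lra.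
pose F m := [set x | forall n, (m <= n)%N -> q1 * n%:R <= S n x].
have mF m : measurable (F m).
  have -> : F m = \bigcap_n [set x | (m <= n)%N -> q1 * n%:R <= S n x].
    by apply/seteqP; split => x /= h n; [move=> _; exact: h | exact: h n Logic.I].
  apply: bigcapT_measurable => n /=; case: (leqP m n) => hmn.
    have -> : [set x | true -> q1 * n%:R <= S n x] = [set x | q1 * n%:R <= S n x].
      by apply/seteqP; split => x /= h; [exact: h | move=> _].
    exact/meas_ge/Ssum_meas.
  have -> : [set x | false -> q1 * n%:R <= S n x] = setT.
    by apply/seteqP; split => x //= _ h.
  exact: measurableT.
have ndF : nondecreasing_seq F.
  by move=> m m2 hm; apply/subsetPset => x /= h n hn; apply: h; lia.
have cover : ~` Dset `<=` \bigcup_m F m.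
  move=> x /= hx.
  have : ~ Dk 1 x by move=> h; apply: hx; exists 1%N.
  move=> /existsNP [m hm]; exists m => // n hn.
  rewrite leNgt; apply/negP => hlt; apply: hm; by exists n.
have bnd m : (P (F m) <= (I / q1)%:E)%E.
  set G := [set x | q1 * m.+1%:R <= S m.+1 x].
  have mG : measurable G by exact/meas_ge/Ssum_meas.
  have FG : F m `<=` G by move=> x /= h; apply: h.
  apply: (le_trans (le_measure P (mem_set (mF m)) (mem_set mG) FG)).
  have cp : 0 < q1 * m.+1%:R by rewrite mulr_gt0.
  have hm := markov_nn (Ssum f m.+1) (q1 * m.+1%:R) cp (Ssum_meas f m.+1 mf) (fun x => Ssum_ge0 f m.+1 x f0).
  rewrite (integral_Ssum f m.+1 I mf f0 hI) -/G (P_fin mG) -EFinM lee_fin in hm.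
  change (P G <= (I / q1)%:E)%E.
  rewrite (P_fin mG) lee_fin.
  rewrite ler_pdivlMr //.  have m0 : (0:R) < m.+1%:R by [].  nra.
have hlim := nondecreasing_cvg_mu (mu := P) mF (bigcupT_measurable F mF) ndF.
have hU : (P (\bigcup_m F m) <= (I / q1)%:E)%E.
  rewrite -(cvg_lim _ hlim) //; apply: lime_le; first by apply/cvg_ex; eexists; exact: hlim.
  by apply: nearW => m; exact: bnd.
have hC : P (~` Dset) = 1%E.
  rewrite probability_setC ?Dset_meas //.
  transitivity (1 - 0 : \bar R)%E; [congr (_ - _)%E; exact: hD0 | exact: sube0].
  exact: Dset_meas.
have : (1 <= (I / q1)%:E)%E.
  rewrite -hC; apply: le_trans hU.
  exact: le_measure (mem_set (measurableC Dset_meas)) (mem_set (bigcupT_measurable F mF)) cover.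
rewrite lee_fin ler_pdivlMr // mul1r q1E; have : (0 : R) < 2^-1 by []; lra.
Qed.

Hypothesis intf : P.-integrable setT (EFin \o f).

Definition Bset (K : nat) := [set x | Dset x /\ forall t, (t < K)%N -> Lc * t.+1%:R <= S t.+1 x].
Definition gK (K : nat) (x : T) : R := \1_(Bset K) x * f x.

Lemma Bset_meas K : measurable (Bset K).
Proof.
have -> : Bset K = Dset `&` \bigcap_t [set x | (t < K)%N -> Lc * t.+1%:R <= S t.+1 x].
  apply/seteqP; split => x /= [h1 h2]; split => // t; first by move=> _; exact: h2.
  by move=> ht; exact: h2 t Logic.I ht.
apply: measurableI; first exact: Dset_meas.
apply: bigcapT_measurable => t /=; case: (ltnP t K) => ht.
  have -> : [set x | true -> Lc * t.+1%:R <= S t.+1 x] = [set x | Lc * t.+1%:R <= S t.+1 x].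
    by apply/seteqP; split => x /= h; [exact: h | move=> _].
  exact/meas_ge/Ssum_meas.
have -> : [set x | false -> Lc * t.+1%:R <= S t.+1 x] = setT.
  by apply/seteqP; split => x //= _ h.
exact: measurableT.
Qed.

Lemma gK_meas K : measurable_fun setT (gK K).
Proof. by apply: measurable_funM => //; exact: measurable_indic (Bset_meas K). Qed.

Lemma gK_ge0 K x : 0 <= gK K x.
Proof. by rewrite /gK indicE; apply: mulr_ge0. Qed.

Lemma gK_le K x : gK K x <= f x.
Proof.
rewrite /gK indicE; case: (x \in Bset K) => /=; first by rewrite mul1r.
by rewrite mul0r.
Qed.

Lemma Bset_out x : exists K, forall K', (K <= K')%N -> ~ Bset K' x.
Proof.
case: (pselect (Dset x)) => hD; last by exists 0%N => K' _ [].
case: hD => k hk; have [n _ hn] := hk 0%N.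
case: n hn => [|t] hn.
  by move: hn; rewrite S0 mulr0 ltxx.
exists t.+1 => K' hK [_ hB]; have := hB t hK.
have : qk k * t.+1%:R <= Lc * t.+1%:R.
  apply: ler_wpM2r => //; rewrite /qk lerBlDr lerDl invr_ge0 //.
lra.
Qed.

Lemma exists_K (eta0 : R) : 0 < eta0 ->
  exists K, (\int[P]_x (gK K x)%:E <= eta0%:E)%E.
Proof.
move=> e0.
have h := @dominated_cvg _ T R P setT measurableT (fun K x => (gK K x)%:E) (cst 0%E) (EFin \o f).
have {h} := h (fun K => (measurable_EFinP _ _).2 (gK_meas K)).
have ff : forall x, [set: T] x -> (fun K => (gK K x)%:E) K @[K --> \oo] --> cst 0%E x.
  move=> x _; have [K0 hK0] := Bset_out x; apply: cvg_near_cst.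
  exists K0 => // K' /= hK'.
  by rewrite /gK indicE memNset ?mul0r //; exact: hK0.
move=> /(_ ff (fun x _ => fin_numE _) intf).
have ab : forall n x, [set: T] x -> (`|(gK n x)%:E| <= (EFin \o f) x)%E.
  by move=> n x _ /=; rewrite lee_fin ger0_norm ?gK_ge0 // gK_le.
move=> /(_ ab); rewrite integral0 => /fine_cvgP [hfin hfc].
have hn := cvgr_lt 0 hfc eta0 e0.
case: hfin => K1 _ h1; case: hn => K2 _ h2.
exists (maxn K1 K2).
have /= u1 := h1 (maxn K1 K2) (leq_maxl _ _).
have /= u2 := h2 (maxn K1 K2) (leq_maxr _ _).
by rewrite -(fineK u1) lee_fin ltW.
Qed.

Lemma Dset_iter p x : Dset x -> Dset (iter p s x).
Proof.
elim: p => [|p IH] //= hx; have := IH hx.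
by rewrite -[in X in X -> _]Dset_inv.
Qed.

Lemma weak_lln (eta0 : R) : 0 < eta0 -> exists N0 : nat, forall N, (N0 <= N)%N ->
  exists G, measurable G /\ ((1 - eta0)%:E <= P G)%E /\
    forall x, G x -> S N x <= (Lc + 2) * N%:R.
Proof.
move=> e0; have [K hK] := exists_K eta0 e0.
have Lc0 : 0 <= Lc by rewrite /Lc; have := I_ge0; lra.
exists (Num.truncn ((Lc + 1) * K%:R)).+1 => N hN.
set M := (N + K)%N.
have M0 : (0 : R) < M%:R by rewrite ltr0n /M; lia.
set E := Ssum (gK K) M.
have mE : measurable_fun setT E := Ssum_meas (gK K) M (gK_meas K).
exists (Dset `&` [set x | E x < M%:R]); split.
  by apply: measurableI; [exact: Dset_meas | exact: meas_lt].
split.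
  set G := Dset `&` [set x | E x < M%:R].
  have mG : measurable G by apply: measurableI; [exact: Dset_meas | exact: meas_lt].
  set B := [set x | M%:R <= E x].
  have mB : measurable B by exact: meas_ge.
  have ig0 : (0 <= \int[P]_x (gK K x)%:E)%E.
    by apply: integral_ge0 => x _; rewrite lee_fin gK_ge0.
  have igf : (\int[P]_x (gK K x)%:E)%E \is a fin_num.
    by rewrite ge0_fin_numE //; apply: le_lt_trans hK _; rewrite ltey.
  set c := fine (\int[P]_x (gK K x)%:E)%E.
  have hc : (\int[P]_x (gK K x)%:E = c%:E)%E by rewrite fineK.
  have ce : c <= eta0 by rewrite -lee_fin -hc.
  have hbad : (P B <= eta0%:E)%E.
    have hm := markov_nn E (M%:R) M0 mE (fun x => Ssum_ge0 (gK K) M x (gK_ge0 K)).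
    rewrite (integral_Ssum (gK K) M c (gK_meas K) (gK_ge0 K) hc) -/B (P_fin mB) -EFinM lee_fin in hm.
    change (P B <= eta0%:E)%E; rewrite (P_fin mB) lee_fin.
    rewrite ler_pM2l // in hm; exact: le_trans hm ce.
  have hCD : P (~` Dset) = 0%E.
    rewrite probability_setC; last exact: Dset_meas.
    transitivity (1 - 1 : \bar R)%E; [congr (_ - _)%E; exact: PD1 | exact: subee].
  have CG : ~` G = ~` Dset `|` B.
    rewrite /G setCI; congr (_ `|` _); apply/seteqP; split => x /=.
      by move=> h; rewrite /B /= leNgt; apply/negP.
    by rewrite /B /= leNgt => /negP.
  have hCG : (P (~` G) <= eta0%:E)%E.
    rewrite CG; apply: le_trans (measureU2 P (measurableC Dset_meas) mB) _.
    change (P (~` Dset) + P B <= eta0%:E)%E; by rewrite hCD add0e.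
  have := probability_setC P (measurableC mG); rewrite setCK => ->.
  move: hCG; rewrite (P_fin (measurableC mG)) !lee_fin. lra.
move=> x [hD hE].
have key : \sum_(j < N) f (iter j s x) <= Lc * M%:R + E x.
  apply: (@chain R (fun j => f (iter j s x)) (fun j => gK K (iter j s x)) Lc K Lc0
    (fun j => f0 _) (fun j => gK_ge0 K _)) => p.
  have hDp := Dset_iter p x hD.
  case: (pselect (Bset K (iter p s x))) => hB.
    by left; rewrite /gK indicE mem_set // mul1r.
  right.
  have : ~ (forall t, (t < K)%N -> Lc * t.+1%:R <= S t.+1 (iter p s x)).
    by move=> h; apply: hB; split.
  move=> /existsNP [t /not_implyP [ht hn]]; exists t => //.
  rewrite ltNge; apply/negP => hle; apply: hn.
  move: hle; rewrite /S /Ssum.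
  have -> : \sum_(j < t.+1) f (iter j s (iter p s x)) = \sum_(i < t.+1) f (iter (p + i) s x).
    by apply: eq_bigr => i _; rewrite -iterD addnC.
  by [].
have hKN : (Lc + 1) * K%:R < N%:R.
  apply: (lt_le_trans (truncnS_gt _)); rewrite ler_nat; exact: hN.
have hS : S N x = \sum_(j < N) f (iter j s x) by [].
rewrite hS; apply: (le_trans key).
move: hE hKN; rewrite /M natrD /=; nra.
Qed.
End Erg.
End Prob.

Theorem lemma2p3 (R : realType) (dsp : measure_display) (Omega : measurableType dsp)
  (P : probability Omega R) (sigma : Omega -> Omega) (d : nat)
  (A : Omega -> 'M[R]_d) :
  measure_preserving P sigma ->
  ergodic P sigma ->
  (forall i j, measurable_fun setT (fun w => A w i j)) ->
  P.-integrable setT (fun w => (logplus (opnorm (A w)))%:E) ->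
  exists C : R, 0 < C /\
    forall eta0 : R, 0 < eta0 ->
    exists eps0 : R, 0 < eps0 /\
      forall eps : R, 0 < eps < eps0 ->
      exists G : set Omega, measurable G /\ ((1 - eta0)%:E <= P G)%E /\
        forall w, G w ->
        forall Delta : int -> 'M[R]_d, (forall n, opnorm (Delta n) <= 1) ->
          let N := Num.truncn (C * `|ln eps|) in
          opnorm (lprod (fun k => A (iter k sigma w) + eps *: Delta k%:Z) N
                  - lprod (fun k => A (iter k sigma w)) N) <= 1.
Proof.
move=> mp erg _ hint.
set h := fun w => logplus (opnorm (A w)).
set f := fun w => h w + 1.
have mh : measurable_fun setT h.
  by apply/measurable_EFinP; case/integrableP: hint.
have h0 w : 0 <= h w by rewrite /h /logplus le_max lexx.
have f0 w : 0 <= f w by rewrite /f; apply: addr_ge0 => //; exact: h0.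
have mf : measurable_fun setT f by apply: measurable_funD => //; exact: measurable_cst.
have intf : P.-integrable setT (EFin \o f).
  have -> : EFin \o f = (fun w => (h w)%:E) \+ (EFin \o cst 1).
    by apply/funext => w.
  apply: integrableD => //; exact: finite_measure_integrable_cst.
set I := fine (\int[P]_x (f x)%:E)%E.
have hI : (\int[P]_x (f x)%:E = I%:E)%E by rewrite fineK //; exact: integrable_fin_num.
set L' := Lc R I + 2.
have I0 : 0 <= I by rewrite -lee_fin -hI; apply: integral_ge0 => x _; rewrite lee_fin.
have L'1 : 1 <= L' by rewrite /L' /Lc; lra.
set C := (2 * L')^-1.
have C0 : 0 < C by rewrite invr_gt0; lra.
have CL : C * L' = 1/2.
  have hL : L' != 0 by rewrite gt_eqF //; lra.
  by rewrite /C; field.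
have C1 : C <= 1/2.
  nra.
exists C; split => // eta0 e0.
have [N0 hN0] := @weak_lln _ _ _ P sigma mp erg f f0 mf I hI intf eta0 e0.
set eps0 := expR (- ((N0%:R + 1) / C)).
exists eps0; split; first exact: expR_gt0.
move=> eps /andP[ep0 epl].
have eps1 : eps < 1.
  apply: lt_trans epl _; rewrite expR_lt1 oppr_lt0; apply: divr_gt0 => //.
have lne : ln eps < 0 by apply: ln_lt0; rewrite ep0 eps1.
have lne0 : ln eps < - ((N0%:R + 1) / C).
  by rewrite -[X in _ < X](expRK) ltr_ln ?posrE ?expR_gt0.
have habs : `|ln eps| = - ln eps by rewrite ltr0_norm.
set N := Num.truncn (C * `|ln eps|).
have Cl0 : 0 <= C * `|ln eps| by apply: mulr_ge0; [exact: ltW|exact: normr_ge0].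
have hNN0 : (N0 <= N)%N.
  rewrite /N truncn_ge_nat // habs.
  have : (N0%:R + 1) / C < - ln eps by lra.
  rewrite ltr_pdivrMr // => hh.
  rewrite mulrC; lra.
have [G [mG [PG HG]]] := hN0 N hNN0.
exists G; split => //; split => // w Gw Delta hD /=.
rewrite -/N.
have epsI : 0 <= eps <= 1 by rewrite (ltW ep0) (ltW eps1).
apply: opnorm_le => v hv.
have [_ hp] := @perturb R d (fun k => A (iter k sigma w)) (fun k => Delta k%:Z) eps epsI (fun k => hD _) N v.
apply: (le_trans hp).
have hfb : N%:R * eps * \prod_(k < N) (opnorm (A (iter k sigma w)) + 1) <= 1.
  apply: (@final_bound R eps C L' N (fun k => opnorm (A (iter k sigma w)))) => //.
  - by rewrite ep0 eps1.
  - exact: ltW.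
  - by rewrite CL.
  - lra.
  - by move=> k; exact: opnorm_ge0.
  - by rewrite -habs truncn_le.
  - exact: HG.
have v0 := @vnorm_ge0 R d v.
have hq : 0 <= N%:R * eps * \prod_(k < N) (opnorm (A (iter k sigma w)) + 1).
  apply: mulr_ge0; first by apply: mulr_ge0 => //; exact: ltW.
  by apply: prodr_ge0 => k _; apply: addr_ge0 => //; exact: opnorm_ge0.
nra.
Qed.
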